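(* Let $P\subset\mathbb{R}^d$ be a full-dimensional lattice polytope with codegree $a$ satisfying $P=\lfloor aP\rfloor+\{P\}$. Then $aP=\lfloor aP\rfloor+\{aP\}$. Moreover, $\{aP\}=(a-1)P+\{P\}$.
   Context: $P$ has facet presentation $P=\{x: n_F(x)\ge -h_F\ \forall \text{ facets } F\}$ with $n_F\in(\mathbb{Z}^d)^*$ primitive inner normals and $h_F\in\mathbb{Z}$. The codegree of a lattice polytope $Q$ is $a_Q=\min\{k\in\mathbb{Z}_{\ge1}: \mathrm{int}(kQ)\cap\mathbb{Z}^d\ne\varnothing\}$; $a=a_P$. For a lattice polytope $Q$, $\lfloor Q\rfloor=\mathrm{conv}(\mathrm{int}(Q)\cap\mathbb{Z}^d)$, and the remainder polytope of $Q$, with facet presentation $Q=\{x: n_G(x)\ge -g_G\}$ (primitive inner normals, integer heights), is $\{Q\}=\mathrm{conv}\{x\in\mathbb{Z}^d: n_G(x)\ge (a_Q-1)g_G-1\ \forall \text{ facets } G\}$. In particular $aP$ has codegree $1$ and facet heights $ah_F$, so $\{aP\}=\mathrm{conv}\{x\in\mathbb{Z}^d: n_F(x)\ge -1\ \forall F\}$. $+$ is Minkowski sum and $0\cdot P=\{0\}$. *)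

(* Defs.v *)
From HB Require Import structures.
From mathcomp Require Import all_boot all_order all_algebra.
From mathcomp Require Import boolp classical_sets reals.
Set Implicit Arguments. Unset Strict Implicit. Unset Printing Implicit Defensive.
Import Order.TTheory GRing.Theory Num.Theory.
Local Open Scope classical_set_scope.
Local Open Scope ring_scope.

Section Polytopes.
Variables (R : realType) (d : nat).
Notation V := 'rV[R]_d.

Definition lattice_pt (x : V) : Prop := forall i : 'I_d, x 0 i \is a Num.int.

Definition conv (S : set V) : set V :=
  [set x | exists (n : nat) (p : 'I_n -> V) (w : 'I_n -> R),
      (forall k, S (p k)) /\ (forall k, 0 <= w k) /\ \sum_(k < n) w k = 1 /\
      x = \sum_(k < n) w k *: p k].

Definition msum (A B : set V) : set V := [set a + b | a in A & b in B].
Definition dil (k : R) (A : set V) : set V := [set k *: a | a in A].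

(* topological interior in R^d (sup-norm balls, giving the standard topology) *)
Definition interior_pts (A : set V) : set V :=
  [set x | exists2 e : R, 0 < e &
     forall y : V, (forall i, `|y 0 i - x 0 i| < e) -> A y].

Definition lattice_polytope (P : set V) : Prop :=
  exists s : seq V, (forall v, v \in s -> lattice_pt v) /\ P = conv [set v | v \in s].

Definition full_dimensional (P : set V) : Prop := interior_pts P !=set0.

Definition ev (n : 'rV[int]_d) (x : V) : R := \sum_(i < d) (n 0 i)%:~R * x 0 i.

Definition primitive (n : 'rV[int]_d) : Prop :=
  \big[gcdn/0%N]_(i < d) `|n ord0 i|%N = 1%N.

Definition hsets (F : seq ('rV[int]_d * int)) : set V :=
  [set x | forall nh, nh \in F -> ev nh.1 x >= - (nh.2)%:~R].

(* F is the facet presentation of P: primitive inner normals, integer heights,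
   P is the intersection of the half-spaces, and no inequality is redundant
   (for a full-dimensional polytope this is exactly the facet presentation). *)
Definition facet_presentation (P : set V) (F : seq ('rV[int]_d * int)) : Prop :=
  [/\ forall nh, nh \in F -> primitive nh.1,
      P = hsets F &
      forall nh, nh \in F -> hsets (rem nh F) != P].

Definition is_codegree (Q : set V) (a : nat) : Prop :=
  [/\ (1 <= a)%N,
      exists x, interior_pts (dil a%:R Q) x /\ lattice_pt x &
      forall k : nat, (1 <= k)%N -> (k < a)%N ->
        forall x, interior_pts (dil k%:R Q) x -> ~ lattice_pt x].

Definition lfloor (Q : set V) : set V :=
  conv [set x | interior_pts Q x /\ lattice_pt x].

(* remainder polytope of Q, given the facet presentation G of Q and its codegree aQ *)
Definition remainder (G : seq ('rV[int]_d * int)) (aQ : nat) : set V :=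
  conv [set x | lattice_pt x /\
     forall ng, ng \in G -> ev ng.1 x >= ((aQ%:Z - 1) * ng.2 - 1)%:~R].

(* facet presentation of kP from that of P: heights multiplied by k *)
Definition scale_pres (k : nat) (F : seq ('rV[int]_d * int)) :=
  [seq (nh.1, k%:Z * nh.2) | nh <- F].

End Polytopes.

(* Main.v *)
Require Import Defs.
From HB Require Import structures.
From mathcomp Require Import all_boot all_order all_algebra.
From mathcomp Require Import boolp classical_sets reals.
From mathcomp Require Import ring lra zify.
Import Order.TTheory GRing.Theory Num.Theory.
Local Open Scope classical_set_scope.
Local Open Scope ring_scope.

Section Helpers.
Variables (R : realType) (d : nat).
Notation V := 'rV[R]_d.

Definition convex (C : set V) := forall (x y : V) (t : R), 0 <= t -> t <= 1 ->
  C x -> C y -> C (t *: x + (1 - t) *: y).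

Lemma ev_add (n : 'rV[int]_d) (x y : V) : ev n (x + y) = ev n x + ev n y.
Proof. by rewrite /ev -big_split /=; apply: eq_bigr => i _; rewrite mxE mulrDr. Qed.

Lemma ev_scale (n : 'rV[int]_d) c (x : V) : ev n (c *: x) = c * ev n x.
Proof.
rewrite /ev mulr_sumr; apply: eq_bigr => i _; by rewrite mxE mulrCA.
Qed.

Lemma conv_sub (A : set V) x : A x -> conv A x.
Proof.
move=> Ax; exists 1%N, (fun _ => x), (fun _ => 1).
split; first by [].
split; first by move=> _; exact: ler01.
by rewrite !big_ord1 scale1r.
Qed.

Lemma conv_mono (A B : set V) : A `<=` B -> conv A `<=` conv B.
Proof.
move=> AB x [n [p [w [Hp [Hw [H1 ->]]]]]]; exists n, p, w; split=> // k; exact: AB.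
Qed.

Lemma conv0 x : ~ conv (@set0 V) x.
Proof.
move=> [n [p [w [Hp [Hw [H1 _]]]]]]; case: n p w Hp Hw H1 => [|n] p w Hp Hw H1.
  by move: H1; rewrite big_ord0 => /eqP; rewrite eq_sym oner_eq0.
by case: (Hp ord0).
Qed.

Lemma conv_convex (A : set V) : convex (conv A).
Proof.
move=> x y t t0 t1 [n [p [w [Hp [Hw [H1 ->]]]]]] [m [q [u [Hq [Hu [H2 ->]]]]]].
exists (n + m)%N, (fun k => match split k with inl i => p i | inr j => q j end),
  (fun k => match split k with inl i => t * w i | inr j => (1 - t) * u j end).
split; first by move=> k; case: split.
split; first by move=> k; case: split => i; apply: mulr_ge0 => //; rewrite subr_ge0.
split.
  rewrite big_split_ord /=.
  under eq_bigr do rewrite (unsplitK (inl _)).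
  under [X in _ + X]eq_bigr do rewrite (unsplitK (inr _)).
  by rewrite -!mulr_sumr H1 H2 !mulr1 addrC subrK.
symmetry; rewrite big_split_ord /=.
under eq_bigr do rewrite (unsplitK (inl _)).
under [X in _ + X]eq_bigr do rewrite (unsplitK (inr _)).
by rewrite !scaler_sumr; congr (_ + _); apply: eq_bigr => i _; rewrite scalerA.
Qed.

Lemma conv_min (A C : set V) : convex C -> A `<=` C -> conv A `<=` C.
Proof.
move=> cC AC x [n [p [w [Hp [Hw [H1 ->]]]]]].
elim: n p w Hp Hw H1 => [|n IH] p w Hp Hw H1.
  by move: H1; rewrite big_ord0 => /eqP; rewrite eq_sym oner_eq0.
rewrite big_ord_recr /=; rewrite big_ord_recr /= in H1.
set s := \sum_(i < n) w (widen_ord (leqnSn n) i) in H1 *.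
have s0 : 0 <= s by apply: sumr_ge0 => i _.
have [s_eq0|s_gt0] := eqVneq s 0.
  have wi0 : forall i : 'I_n, w (widen_ord (leqnSn n) i) = 0.
    move=> i; apply: (psumr_eq0P (P := xpredT) (F := fun j => w (widen_ord (leqnSn n) j))) => //.
  under eq_bigr do rewrite wi0 scale0r.
  rewrite big1 // add0r; move: H1; rewrite s_eq0 add0r => ->; rewrite scale1r.
  exact/AC/Hp.
have sp : 0 < s by rewrite lt_def s_gt0.
have wm : w ord_max = 1 - s by rewrite -H1 addrAC subrr add0r.
have -> : \sum_(i < n) w (widen_ord (leqnSn n) i) *: p (widen_ord (leqnSn n) i)
   = s *: \sum_(i < n) (w (widen_ord (leqnSn n) i) / s) *: p (widen_ord (leqnSn n) i).
  rewrite scaler_sumr; apply: eq_bigr => i _; rewrite scalerA; congr (_ *: _).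
  by rewrite mulrC divfK.
rewrite wm; apply: cC => //.
- by rewrite -H1 lerDl.
- apply: (IH (fun i => p (widen_ord (leqnSn n) i)) (fun i => w (widen_ord (leqnSn n) i) / s)).
  + by move=> k; apply: Hp.
  + by move=> k; apply: divr_ge0.
  + by rewrite -mulr_suml mulfV.
- exact/AC/Hp.
Qed.


Lemma convex_affine (C : set V) c u : convex C -> convex [set y | C (c *: y + u)].
Proof.
move=> cC x y t t0 t1 /= Cx Cy.
have -> : c *: (t *: x + (1 - t) *: y) + u = t *: (c *: x + u) + (1 - t) *: (c *: y + u).
  by apply/rowP => i; rewrite !mxE; ring.
exact: cC.
Qed.

Lemma convex_addl (C : set V) u : convex C -> convex [set y | C (u + y)].
Proof.
move=> cC; have := convex_affine C 1 u cC.
have -> : [set y | C (1 *: y + u)] = [set y | C (u + y)].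
  by apply/seteqP; split => y /=; rewrite scale1r addrC.
by [].
Qed.

Lemma convex_addr (C : set V) u : convex C -> convex [set y | C (y + u)].
Proof.
move=> cC; have := convex_affine C 1 u cC.
have -> : [set y | C (1 *: y + u)] = [set y | C (y + u)].
  by apply/seteqP; split => y /=; rewrite scale1r.
by [].
Qed.

Lemma hsets_convex (F : seq ('rV[int]_d * int)) : convex (hsets (R:=R) F).
Proof.
move=> x y t t0 t1 Hx Hy nh nhF; have ex := Hx _ nhF; have ey := Hy _ nhF.
rewrite ev_add !ev_scale.
have t0' : 0 <= 1 - t by rewrite subr_ge0.
have h1 := ler_wpM2l t0 ex; have h2 := ler_wpM2l t0' ey.
set h := - _ in h1 h2 *.
have -> : h = t * h + (1 - t) * h by ring.
exact: lerD h1 h2.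
Qed.

Lemma intrnat (a : nat) : ((a%:Z)%:~R : R) = a%:R.
Proof. by []. Qed.

Lemma dil_hsets (a : nat) (F : seq ('rV[int]_d * int)) : (0 < a)%N ->
  dil a%:R (hsets (R:=R) F) = hsets (R:=R) (scale_pres a F).
Proof.
move=> a0; have apos : (0 : R) < a%:R by rewrite ltr0n.
apply/seteqP; split => y.
  move=> [p Hp <-] ng /mapP [nh nhF ->] /=.
  rewrite ev_scale intrM intrnat -mulrN.
  by rewrite ler_pM2l //; apply: Hp.
move=> Hy; exists (a%:R^-1 *: y); last by rewrite scalerA mulfV ?scale1r // gt_eqF.
move=> nh nhF; rewrite ev_scale.
rewrite -(ler_pM2l apos) mulrA mulfV ?gt_eqF // mul1r.
have := Hy (nh.1, a%:Z * nh.2) (map_f _ nhF).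
by rewrite /= intrM intrnat mulrN.
Qed.


Lemma ev_int (n : 'rV[int]_d) (x : V) : lattice_pt x -> ev n x \is a Num.int.
Proof.
move=> Lx; apply: rpred_sum => i _; apply: rpredM; first exact: intr_int.
exact: Lx.
Qed.

Lemma int_step (x : R) (c : int) : x \is a Num.int -> c%:~R < x -> (c + 1)%:~R <= x.
Proof.
move=> /intrP [m ->]; rewrite ltr_int ler_int => cm.
by rewrite lezD1.
Qed.

Lemma lattice_add (x y : V) : lattice_pt x -> lattice_pt y -> lattice_pt (x + y).
Proof. by move=> Lx Ly i; rewrite mxE; apply: rpredD. Qed.

Lemma lattice_scale (c : nat) (x : V) : lattice_pt x -> lattice_pt (c%:R *: x).
Proof. by move=> Lx i; rewrite mxE; apply: rpredM => //; exact: intr_int (c%:Z). Qed.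

Lemma primitive_nz (n : 'rV[int]_d) : primitive n -> exists j, n 0 j != 0.
Proof.
rewrite /primitive; case: (pickP (fun j => n 0 j != 0)) => [j nj|all0]; first by exists j.
rewrite big1 // => i _.
by move: (all0 i) => /negbFE/eqP; rewrite (_ : ord0 = 0) //= => ->.
Qed.

Lemma ev_delta (n : 'rV[int]_d) j : ev n (delta_mx 0 j : V) = (n 0 j)%:~R.
Proof.
rewrite /ev (bigD1 j) //= big1 ?addr0.
  by rewrite mxE !eqxx mulr1.
by move=> i ij; rewrite mxE (negbTE ij) andbF mulr0.
Qed.

Lemma interior_gt (A : set V) (n : 'rV[int]_d) (c : R) (w : V) :
  (forall y, A y -> c <= ev n y) -> (exists j, n 0 j != 0) ->
  interior_pts A w -> c < ev n w.
Proof.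
move=> HA [j nj] [e e0 He].
set s := Num.sg ((n 0 j)%:~R : R).
set y := w - (e / 2 * s) *: (delta_mx 0 j : V).
have Ay : A y.
  apply: He => i; rewrite /y !mxE.
  have -> : w 0 i - (e / 2 * s) * (((0 : 'I_1) == 0) && (i == j))%:R - w 0 i
     = - ((e / 2 * s) * (((0 : 'I_1) == 0) && (i == j))%:R) by ring.
  rewrite normrN normrM normrM normr_sg.
  have h1 : `|e / 2| = e / 2 by rewrite ger0_norm // divr_ge0 // ltW.
  rewrite h1.
  case: (i == j); case: (_ != 0); rewrite /= ?normr1 ?normr0 ?mulr1 ?mulr0;
    try lra.
have := HA y Ay; rewrite /y ev_add -scaleNr ev_scale ev_delta.
move=> h; apply: (le_lt_trans h).
rewrite /s mulNr -!mulrA (_ : Num.sg _ * _ = `|((n 0 j)%:~R:R)|); last by rewrite normrEsg.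
have : 0 < `|((n 0 j)%:~R : R)| by rewrite normr_gt0 intr_eq0.
move=> hp; have : 0 < e * (2^-1 * `|((n 0 j)%:~R : R)|).
  by rewrite mulr_gt0 // mulr_gt0 // invr_gt0 ltr0n.
lra.
Qed.


Lemma conv_cons (t0 : V) (L : seq V) z : conv [set v | v \in t0 :: L] z ->
  z = t0 \/ exists mu y, [/\ 0 <= mu, mu <= 1, conv [set v | v \in L] y &
                           z = mu *: t0 + (1 - mu) *: y].
Proof.
move=> [n [p [w [Hp [Hw [H1 ->]]]]]].
case: L Hp => [|q L'] Hp.
  left; have -> : \sum_(k < n) w k *: p k = \sum_(k < n) w k *: t0.
    by apply: eq_bigr => k _; have := Hp k; rewrite /= inE => /eqP ->.
  by rewrite -scaler_suml H1 scale1r.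
set lam := \sum_(k < n) (if p k == t0 then w k else 0).
set rest := \sum_(k < n) (if p k == t0 then 0 else w k).
have hsum : lam + rest = 1.
  by rewrite -H1 /lam /rest -big_split /=; apply: eq_bigr => k _; case: ifP => _;
    rewrite ?addr0 ?add0r.
have rest0 : 0 <= rest by apply: sumr_ge0 => k _; case: ifP.
have lam0 : 0 <= lam by apply: sumr_ge0 => k _; case: ifP.
have hz : \sum_(k < n) w k *: p k = lam *: t0 +
     \sum_(k < n) (if p k == t0 then 0 else w k) *: p k.
  rewrite /lam scaler_suml -big_split /=; apply: eq_bigr => k _.
  by case: ifP => [/eqP ->|_]; rewrite ?scale0r ?addr0 ?add0r.
have [lam1|lam1] := eqVneq lam 1.
  left; rewrite hz lam1 scale1r big1 ?addr0 // => k _.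
  have : rest = 0 by lra.
  move=> /(psumr_eq0P (P := xpredT) (F := fun k => if p k == t0 then 0 else w k)).
  move=> /(_ _ k isT) ->; [by rewrite scale0r | by move=> i _; case: ifP].
right; exists lam.
have r0 : rest != 0 by apply/eqP => r0; move: lam1; rewrite -hsum r0 addr0 eqxx.
have hr : 1 - lam = rest by lra.
exists (\sum_(k < n) ((if p k == t0 then 0 else w k) / rest) *:
           (if p k == t0 then q else p k)).
split => //.
- lra.
- exists n, (fun k => if p k == t0 then q else p k),
     (fun k => (if p k == t0 then 0 else w k) / rest).
  split; first by move=> k; case: ifP => /=; rewrite ?mem_head // => /negbT pt;
    have := Hp k; rewrite /= inE (negbTE pt).
  split; first by move=> k; apply: divr_ge0 => //; case: ifP.
  by split => //; rewrite -mulr_suml mulfV.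
- rewrite hz hr scaler_sumr; congr (_ + _); apply: eq_bigr => k _.
  rewrite scalerA mulrC divfK //.
  by case: ifP => _ //; rewrite !scale0r.
Qed.


Lemma step_alg (t0 t y0 y b c c0 : V) (al0 al lam mu : R) :
  lam != 1 -> al + mu * (al0 / (1 - lam)) != 0 ->
  t0 + al0 *: b = (lam *: t0 + (1 - lam) *: y0) + al0 *: c0 ->
  t + al *: b = (mu *: t0 + (1 - mu) *: y) + al *: c ->
  let al' := al + mu * (al0 / (1 - lam)) in
  t + al' *: b = (mu *: y0 + (1 - mu) *: y) +
     al' *: ((al / al') *: c + (1 - al / al') *: c0).
Proof.
move=> l1 a0 e0 e al'; apply/rowP => i.
have := congr1 (fun v : V => v 0 i) e0; have := congr1 (fun v : V => v 0 i) e.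
rewrite /al' !mxE => ei e0i.
have l1' : 1 - lam != 0 by rewrite subr_eq0 eq_sym.
have T1 : (1 - lam) * t0 0 i = (1 - lam) * y0 0 i + al0 * (c0 0 i - b 0 i) by lra.
have T0 : t0 0 i = y0 0 i + al0 / (1 - lam) * (c0 0 i - b 0 i).
  apply: (mulfI l1'); rewrite T1; field; exact: l1'.
have Tt : t 0 i = mu * t0 0 i + (1 - mu) * y 0 i + al * c 0 i - al * b 0 i by lra.
rewrite Tt T0; field.
rewrite l1' /=.
have -> : al * (1 - lam) + mu * al0 = (1 - lam) * (al + mu * (al0 / (1 - lam))).
  by field.
by rewrite mulf_neq0.
Qed.


Lemma cancel_conv (C : set V) (b : V) : convex C -> forall L : seq V, L != [::] ->
  (forall t, t \in L -> exists al, 0 < al /\ exists z c,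
      conv [set v | v \in L] z /\ C c /\ t + al *: b = z + al *: c) -> C b.
Proof.
move=> cC L; elim: L => [//|t0 L' IH] _ H.
have [al0 [al00 [z0 [c0 [hz0 [hc0 e0]]]]]] := H t0 (mem_head _ _).
have triv : t0 + al0 *: b = t0 + al0 *: c0 -> C b.
  by move=> /addrI /(scalerI (lt0r_neq0 al00)) ->.
have [ez | [lam [y0 [l0 l1 hy0 ez0]]]] := conv_cons _ _ _ hz0.
  by apply: triv; rewrite e0 ez.
rewrite ez0 in e0.
have [lam1|lam1] := eqVneq lam 1.
  by apply: triv; rewrite e0 lam1 scale1r subrr scale0r addr0.
have l1' : lam < 1 by rewrite lt_neqAle lam1.
have LL : L' != [::].
  case: L' {IH H hz0} hy0 => // hy; exfalso; apply: (conv0 y0).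
  by apply: (conv_mono _ _ _ _ hy) => v /=; rewrite in_nil.
apply: (IH LL) => t tL.
have [al [al_0 [z [c [hz [hc e]]]]]] := H t (@mem_behead _ (t0 :: L') _ tL).
have [mu [y [m0 m1 hy ez]]] : exists mu y, [/\ 0 <= mu, mu <= 1,
    conv [set v | v \in L'] y & z = mu *: t0 + (1 - mu) *: y].
  case: (conv_cons _ _ _ hz) => [->|//]; exists 1, y0; split => //.
  by rewrite subrr scale0r addr0 scale1r.
rewrite ez in e.
have be0 : 0 <= al0 / (1 - lam) by rewrite divr_ge0 // ?subr_ge0 // ltW.
have alp : 0 < al + mu * (al0 / (1 - lam)).
  by apply: ltr_wpDr => //; apply: mulr_ge0.
exists (al + mu * (al0 / (1 - lam))); split => //.
exists (mu *: y0 + (1 - mu) *: y),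
  ((al / (al + mu * (al0 / (1 - lam)))) *: c +
   (1 - al / (al + mu * (al0 / (1 - lam)))) *: c0).
split; first exact: conv_convex.
split.
  apply: cC => //; first by rewrite divr_ge0 // ltW.
  by rewrite ler_pdivrMr // mul1r lerDl mulr_ge0.
have h := step_alg _ _ _ _ _ _ _ _ _ _ _ lam1 (lt0r_neq0 alp) e0 e; exact h.
Qed.


Lemma box_enum (M : nat) : exists L : seq V, forall x : V, lattice_pt x ->
  (forall i, `|x 0 i| <= M%:R) -> x \in L.
Proof.
exists [seq \row_i ((((f : {ffun 'I_d -> 'I_(2 * M).+1}) i : nat)%:R : R) - M%:R)
         | f <- enum {ffun 'I_d -> 'I_(2 * M).+1}].
move=> x Lx Bx.
pose m i := Num.floor (x 0 i).
have xm : forall i, x 0 i = (m i)%:~R.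
  by move=> i; apply/esym/eqP; rewrite -intrEfloor; exact: Lx.
have mb : forall i, (- (M%:Z) <= m i) && (m i <= M%:Z).
  move=> i; have := Bx i; rewrite xm -intr_norm -[M%:R]/((M%:Z)%:~R) ler_int.
  by rewrite ler_norml.
pose k i := absz (m i + M%:Z).
have kb : forall i, (k i < (2 * M).+1)%N.
  by move=> i; have /andP [h1 h2] := mb i; rewrite /k; lia.
apply/mapP; exists [ffun i => inord (k i)]; first by rewrite mem_enum.
apply/rowP => i; rewrite !mxE ffunE inordK // /k natr_absz ger0_norm.
  by rewrite intrD xm addrK.
by have /andP [h1 h2] := mb i; lia.
Qed.


Lemma seq_bound (s : seq V) : forall v, v \in s -> forall i,
  `|v 0 i| <= \sum_(w <- s) \sum_(j < d) `|w 0 j|.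
Proof.
elim: s => [//|w s IH] v; rewrite inE big_cons => /orP [/eqP ->|vs] i.
  rewrite -[X in X <= _]addr0; apply: lerD; last by apply: sumr_ge0 => *; apply: sumr_ge0.
  by rewrite (bigD1 i) //= lerDl sumr_ge0.
rewrite -[X in X <= _]add0r; apply: lerD; first exact: sumr_ge0.
exact: IH.
Qed.

Lemma polytope_bounded (s : seq V) (a : nat) : exists M : nat,
  forall y, dil a%:R (conv [set v | v \in s]) y -> forall i, `|y 0 i| <= M%:R.
Proof.
set B := \sum_(w <- s) \sum_(j < d) `|w 0 j|.
have B0 : 0 <= B by apply: sumr_ge0 => *; apply: sumr_ge0.
have cb : conv [set v | v \in s] `<=` [set x : V | forall i, `|x 0 i| <= B].
  apply: conv_min; last by move=> v /= vs i; exact: seq_bound.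
  move=> x y t t0 t1 /= hx hy i; rewrite !mxE.
  apply: (le_trans (ler_normD _ _)); rewrite !normrM (ger0_norm t0).
  rewrite (ger0_norm (_ : 0 <= 1 - t)); last by rewrite subr_ge0.
  have := ler_wpM2l t0 (hx i); have : 0 <= 1 - t by rewrite subr_ge0.
  move=> t0' h1; have h2 := ler_wpM2l t0' (hy i).
  apply: le_trans (lerD h1 h2) _; lra.
exists (Num.Def.archi_bound (a%:R * B)) => y [p Hp <-] i.
have h := archi_boundP (mulr_ge0 (ler0n _ a) B0).
rewrite mxE normrM ger0_norm ?ler0n //.
apply: le_trans (ltW h); apply: ler_wpM2l => //; exact: cb.
Qed.


Lemma interior_sub (A : set V) x : interior_pts A x -> A x.
Proof. by move=> [e e0 He]; apply: He => i; rewrite subrr normr0. Qed.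

End Helpers.

Theorem lemma3p17 (R : realType) (d : nat) (P : set 'rV[R]_d)
    (F : seq ('rV[int]_d * int)) (a : nat) :
  lattice_polytope P -> full_dimensional P ->
  facet_presentation P F -> is_codegree P a ->
  P = msum (lfloor (dil a%:R P)) (remainder F a) ->
  dil a%:R P = msum (lfloor (dil a%:R P)) (remainder (scale_pres a F) 1) /\
  remainder (scale_pres a F) 1 = msum (dil (a - 1)%:R P) (remainder F a).
Proof.
move=> [s [Ls Pdef]] _ [Fprim HP Firr] [a1 [x0 [Ix0 Lx0]] _] Hyp.
set A := dil a%:R P.
have HA : A = hsets (scale_pres a F) by rewrite /A HP dil_hsets.
set T := [set x | interior_pts A x /\ lattice_pt x].
set K := [set x : 'rV[R]_d | lattice_pt x /\ forall ng, ng \in scale_pres a F ->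
   ((1%:Z - 1) * ng.2 - 1)%:~R <= ev ng.1 x].
set G := [set x : 'rV[R]_d | lattice_pt x /\ forall ng, ng \in F ->
   ((a%:Z - 1) * ng.2 - 1)%:~R <= ev ng.1 x].
have -> : lfloor A = conv T by [].
have -> : remainder (scale_pres a F) 1 = conv K by [].
have -> : remainder F a = conv G by [].
set Q := msum (dil (a - 1)%:R P) (conv G).
have Pconv : @convex R d P by rewrite Pdef; exact: conv_convex.
have Kineq : forall x, K x -> forall nh, nh \in F -> -1 <= ev nh.1 x.
  move=> x [_ Kx] nh nhF; have := Kx _ (map_f (fun nh => (nh.1, a%:Z * nh.2)) nhF).
  by rewrite /= subrr mul0r sub0r intrN.
have Pineq : forall p, P p -> forall nh, nh \in F -> - (nh.2)%:~R <= ev nh.1 p.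
  by move=> p; rewrite HP; apply.
have Tineq : forall t, T t -> forall nh, nh \in F ->
    (- (a%:Z * nh.2) + 1)%:~R <= ev nh.1 t.
  move=> t [It Lt] nh nhF; apply: int_step; first exact: ev_int.
  apply: (@interior_gt R d A) => //; last exact/primitive_nz/Fprim.
  move=> y; rewrite HA => Hy; have := Hy _ (map_f (fun nh => (nh.1, a%:Z * nh.2)) nhF).
  by rewrite /= intrN.
have am1 : ((a - 1)%:R : R) = a%:R - 1 by rewrite natrB.
have am0 : (0 : R) <= a%:R - 1 by rewrite -am1 ler0n.
have F1 : forall q, Q q -> conv K q.
  have step : forall v g, v \in s -> G g -> K ((a - 1)%:R *: v + g).
    move=> v g vs [Lg Gg]; split.
      by apply: lattice_add => //; apply: lattice_scale; exact: Ls.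
    move=> ng /mapP [nh nhF ->] /=.
    rewrite subrr mul0r sub0r intrN ev_add ev_scale.
    have Pv : P v by rewrite Pdef; apply: conv_sub.
    have hv := Pineq v Pv nh nhF; have hg := Gg nh nhF.
    rewrite intrB intrM intrB /= in hg.
    have := ler_wpM2l am0 hv; rewrite am1.
    move: hg; rewrite (_ : (a%:Z)%:~R = a%:R) //; set h := (nh.2)%:~R.
    move=> hg hv'; have : ((1%:Z)%:~R : R) = 1 by []. lra.
  have h1 : forall v, v \in s -> forall r, conv G r -> conv K ((a - 1)%:R *: v + r).
    move=> v vs; apply: (@conv_min R d _ _ (convex_addl _ _ _ _ (conv_convex _ _ _))).
    by move=> g Gg; apply: conv_sub; apply: step.
  move=> q [y [p Pp <-] [r Rr <-]].
  have : P `<=` [set p | conv K ((a - 1)%:R *: p + r)].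
    rewrite {1}Pdef; apply: (@conv_min R d _ _ (convex_affine _ _ _ _ _ (conv_convex _ _ _))).
    by move=> v vs; exact: h1.
  by move/(_ p Pp).
have F2 : forall y, A y -> exists2 z, conv T z & exists2 q, Q q & z + q = y.
  move=> y [p Pp <-]; have := Pp; rewrite {1}Hyp => -[z Tz [r Gr ezr]].
  exists z => //; exists ((a - 1)%:R *: p + r).
    exists ((a - 1)%:R *: p); first by exists p.
    by exists r.
  rewrite am1 -ezr; apply/rowP => i; rewrite !mxE; ring.
have F3 : forall z x, conv T z -> conv K x -> A (z + x).
  have step : forall w k, T w -> K k -> A (w + k).
    move=> w k Tw Kk; rewrite HA => ng /mapP [nh nhF ->] /=.
    rewrite ev_add; have := Tineq w Tw nh nhF; have := Kineq k Kk nh nhF.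
    rewrite intrD intrN /=; have : ((1%:Z)%:~R : R) = 1 by []. lra.
  have Aconv : @convex R d A by rewrite HA; exact: hsets_convex.
  have h1 : forall w, T w -> forall x, conv K x -> A (w + x).
    move=> w Tw; apply: (@conv_min R d _ _ (convex_addl _ _ _ _ Aconv)).
    by move=> k Kk; apply: step.
  move=> z x Tz Kx.
  have : conv T `<=` [set w | A (w + x)].
    apply: (@conv_min R d _ _ (convex_addr _ _ _ _ Aconv)).
    by move=> w Tw; exact: h1.
  by move/(_ z Tz).
have Qconv : @convex R d Q.
  move=> x y t t0 t1 [x1 [p1 Pp1 <-] [r1 Gr1 <-]] [y1 [p2 Pp2 <-] [r2 Gr2 <-]].
  exists ((a - 1)%:R *: (t *: p1 + (1 - t) *: p2)).
    by exists (t *: p1 + (1 - t) *: p2) => //; apply: Pconv.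
  exists (t *: r1 + (1 - t) *: r2); first exact: conv_convex.
  apply/rowP => i; rewrite !mxE; ring.
split.
  apply/seteqP; split => y.
    move=> /F2 [z Tz [q Qq <-]]; exists z => //; exists q => //; exact: F1.
  by move=> [z Tz [x Kx <-]]; apply: F3.
apply/seteqP; split; last exact: F1.
apply: (@conv_min R d _ _ Qconv) => x Kx.
have [M HM] := polytope_bounded R d s a.
have AM : forall y, A y -> forall i, `|y 0 i| <= M%:R.
  by move=> y; rewrite /A Pdef; apply: HM.
have [Lb HLb] := box_enum R d M.
pose L := [seq v <- Lb | `[< T v >]].
have TL : forall v, T v -> v \in L.
  move=> v Tv; rewrite mem_filter asboolT //=; apply: HLb; first by case: Tv.
  by apply: AM; apply: interior_sub; case: Tv.
have LT : forall v, v \in L -> T v.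
  by move=> v; rewrite mem_filter => /andP [/asboolW].
have LL : L != [::].
  by apply/eqP => L0; have := TL x0 (conj Ix0 Lx0); rewrite L0 in_nil.
apply: (cancel_conv _ _ _ _ Qconv _ LL) => t tL.
have Tt := LT t tL.
have := F3 t x (conv_sub _ _ _ _ Tt) (conv_sub _ _ _ _ Kx).
move=> /F2 [z Tz [q Qq ezq]].
exists 1; split => //; exists z, q; split.
  by apply: (@conv_mono R d T) => // v /TL.
by split => //; rewrite !scale1r.
Qed.
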